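(* Consider the amplicon branching process with stutter with parameters $p,\xi\in[0,1]$, started from a single target amplicon and no stutter amplicons, and let $T$ and $S$ be the numbers of target and stutter amplicons after $n\ge 0$ cycles. Write $q=p(1-\xi)$. Then $$\mathbb{E}[T]=(1+q)^n,\qquad \mathbb{E}[S]=(1+p)^n-(1+q)^n,$$ $$\operatorname{Var}(T)=\frac{1-q}{1+q}\,(1+q)^n\big[(1+q)^n-1\big],$$ $$\mathbb{E}[TS]=(1+q)^{n-1}\Big(\xi\big[1-(1+p)^n\big]+2\big[(1+p)^n-(1+q)^n\big]\Big),$$ and $$\operatorname{Cov}(T,S)=(1+q)^{n-1}\Big[(1-q)\big((1+p)^n-(1+q)^n\big)-\xi\big((1+p)^n-1\big)\Big].$$
   Context: The amplicon branching process with stutter (a model of PCR) is the two-type discrete-time branching process defined as follows. There are two types of particles, target amplicons and stutter amplicons, and all particles persist forever. In each cycle, independently of everything else, each existing target amplicon produces one new target amplicon with probability $p(1-\xi)$, produces one new stutter amplicon with probability $p\xi$, and produces nothing with probability $1-p$; each existing stutter amplicon produces one new stutter amplicon with probability $p$ and nothing with probability $1-p$. Equivalently, the joint probability generating function $F_n(t,s)=\mathbb{E}[t^{T}s^{S}]$ after $n$ cycles satisfies $F_0(t,s)=t$, $G_0(s)=s$, $F_n=(1-p)F_{n-1}+p(1-\xi)F_{n-1}^2+p\xi F_{n-1}G_{n-1}$, $G_n=(1-p)G_{n-1}+pG_{n-1}^2$. *)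

(* Defs.v *)
From mathcomp Require Import all_boot all_order all_algebra.
Set Implicit Arguments. Unset Strict Implicit. Unset Printing Implicit Defensive.
Import Order.TTheory GRing.Theory Num.Theory.
Local Open Scope ring_scope.

(* The amplicon branching process with stutter, as a Markov chain on the
   state (T, S) = (#target amplicons, #stutter amplicons).

   One-cycle transition kernel: from state (t, s), the probability that
   a new targets and b new stutters are produced.  Each of the t targets
   independently produces a target (prob. q = p(1-xi)), a stutter (prob.
   p xi) or nothing (prob. 1-p); each of the s stutters independently
   produces a stutter (prob. p) or nothing (prob. 1-p).  Summing over the
   number i of stutters produced by targets (multinomial for the targets,
   binomial for the stutters): *)
Definition amp_kernel (R : nzRingType) (p xi : R) (t s a b : nat) : R :=
  \sum_(i < b.+1)
    (('C(t, a) * 'C(t - a, i))%:R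
       * (p * (1 - xi)) ^+ a * (p * xi) ^+ i * (1 - p) ^+ (t - a - i)
     * ('C(s, b - i)%:R * p ^+ (b - i) * (1 - p) ^+ (s - (b - i)))).

(* Joint law of (T, S) after n cycles, started from (1, 0):
   amp_dist p xi n t s = P(T = t, S = s).  Since the total number of
   amplicons at most doubles each cycle, after m cycles T, S <= 2^m, so
   summing over t, s <= 2^m covers the whole support. *)
Fixpoint amp_dist (R : nzRingType) (p xi : R) (n : nat) : nat -> nat -> R :=
  match n with
  | 0 => fun t s => ((t == 1%N) && (s == 0%N))%:R
  | m.+1 => fun t' s' =>
      \sum_(t < (2 ^ m).+1) \sum_(s < (2 ^ m).+1)
        amp_dist p xi m t s *
        (if (t <= t')%N && (s <= s')%N
         then amp_kernel p xi t s (t' - t) (s' - s) else 0)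
  end.

Definition amp_E (R : nzRingType) (p xi : R) (n : nat) (f : nat -> nat -> R) : R :=
  \sum_(t < (2 ^ n).+1) \sum_(s < (2 ^ n).+1) amp_dist p xi n t s * f t s.

Definition amp_ET (R : nzRingType) (p xi : R) n := amp_E p xi n (fun t _ => t%:R).
Definition amp_ES (R : nzRingType) (p xi : R) n := amp_E p xi n (fun _ s => s%:R).
Definition amp_ETS (R : nzRingType) (p xi : R) n :=
  amp_E p xi n (fun t s => t%:R * s%:R).
Definition amp_VarT (R : nzRingType) (p xi : R) n :=
  amp_E p xi n (fun t _ => t%:R ^+ 2) - amp_ET p xi n ^+ 2.
Definition amp_CovTS (R : nzRingType) (p xi : R) n :=
  amp_ETS p xi n - amp_ET p xi n * amp_ES p xi n.

(* Main.v *)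
Require Import Defs.
From mathcomp Require Import all_boot all_order all_algebra.
From mathcomp Require Import ring lra zify.
Set Implicit Arguments. Unset Strict Implicit. Unset Printing Implicit Defensive.
Import Order.TTheory GRing.Theory Num.Theory.
Local Open Scope ring_scope.

Section Gen.
Variable R : comNzRingType.
Implicit Types (x y : R) (F : nat -> R).

Lemma sum_cut F m N : (m <= N)%N ->
  \sum_(i < N) (if (i < m)%N then F i else 0) = \sum_(i < m) F i.
Proof.
move=> h; rewrite -(subnKC h) big_split_ord /=.
rewrite [X in _ + X]big1 ?addr0; last by move=> i _; rewrite ltnNge leq_addr.
by apply: eq_bigr => i _; rewrite ltn_ord.
Qed.

Lemma sum_trunc F m N : (m <= N)%N -> (forall i, (m <= i)%N -> F i = 0) ->
  \sum_(i < N) F i = \sum_(i < m) F i.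
Proof.
move=> h h0; rewrite -(sum_cut F h); apply: eq_bigr => i _.
by case: ltnP => // /h0.
Qed.

Lemma sum_shift F t N : (t <= N)%N ->
  \sum_(i < N) (if (t <= i)%N then F (i - t)%N else 0) = \sum_(a < N - t) F a.
Proof.
move=> h; have -> : N = (t + (N - t))%N by rewrite subnKC.
rewrite addKn big_split_ord /=.
rewrite big1 ?add0r; last by move=> i _; rewrite leqNgt ltn_ord.
by apply: eq_bigr => i _; rewrite leq_addr addKn.
Qed.

Lemma sum_tri (F : nat -> nat -> R) B :
  \sum_(b < B) \sum_(i < b.+1) F i (b - i)%N =
  \sum_(i < B) \sum_(j < B - i) F i j.
Proof.
transitivity (\sum_(b < B) \sum_(i < B) (if (i < b.+1)%N then F i (b - i)%N else 0)).
  by apply: eq_bigr => b _; rewrite (sum_cut (fun i => F i (b - i)%N)).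
rewrite exchange_big /=; apply: eq_bigr => i _.
rewrite -sum_shift; last by apply: ltnW.
by apply: eq_bigr.
Qed.

Lemma B0 x y m :
  \sum_(a < m.+1) 'C(m, a)%:R * x ^+ a * y ^+ (m - a) = (x + y) ^+ m.
Proof.
rewrite addrC exprDn; apply: eq_bigr => a _.
by rewrite -mulr_natl; ring.
Qed.

Lemma A_left F m :
  \sum_(a < m.+1) a%:R * ('C(m, a)%:R * F a) =
  m%:R * \sum_(a < m) 'C(m.-1, a)%:R * F a.+1.
Proof.
rewrite big_ord_recl /= mul0r add0r mulr_sumr; apply: eq_bigr => a _.
by rewrite /bump /= add1n mulrA -natrM -mul_bin_diag natrM mulrA.
Qed.

Lemma A_right F m :
  \sum_(a < m.+1) (m - a)%:R * ('C(m, a)%:R * F a) =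
  m%:R * \sum_(a < m) 'C(m.-1, a)%:R * F a.
Proof.
rewrite big_ord_recr /= subnn mul0r addr0 mulr_sumr; apply: eq_bigr => a _.
by rewrite mulrA -natrM -mul_bin_down natrM mulrA.
Qed.

Lemma G1 x y m :
  \sum_(a < m.+1) a%:R * ('C(m, a)%:R * x ^+ a * y ^+ (m - a)) =
  m%:R * x * (x + y) ^+ m.-1.
Proof.
rewrite (eq_bigr (fun a : 'I_m.+1 => a%:R * ('C(m, a)%:R * (x ^+ a * y ^+ (m - a)))));
  last by move=> a _; rewrite !mulrA.
rewrite (A_left (fun a => x ^+ a * y ^+ (m - a))); case: m => [|m]; first by rewrite big_ord0 !mul0r.
rewrite -mulrA; congr (_ * _); rewrite /= -B0 mulr_sumr; apply: eq_bigr => a _.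
by rewrite subSS exprS; ring.
Qed.

Lemma Lr x y m :
  \sum_(a < m.+1) (m - a)%:R * ('C(m, a)%:R * x ^+ a * y ^+ (m - a).-1) =
  m%:R * (x + y) ^+ m.-1.
Proof.
rewrite (eq_bigr (fun a : 'I_m.+1 => (m - a)%:R * ('C(m, a)%:R * (x ^+ a * y ^+ (m - a).-1))));
  last by move=> a _; rewrite !mulrA.
rewrite (A_right (fun a => x ^+ a * y ^+ (m - a).-1)); case: m => [|m]; first by rewrite big_ord0 !mul0r.
congr (_ * _); rewrite /= -B0; apply: eq_bigr => a _.
by rewrite subSn ?mulrA // -ltnS.
Qed.

Lemma G2 x y m :
  \sum_(a < m.+1) a%:R ^+ 2 * ('C(m, a)%:R * x ^+ a * y ^+ (m - a)) =
  m%:R * x * ((m.-1)%:R * x * (x + y) ^+ (m.-1).-1 + (x + y) ^+ m.-1).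
Proof.
rewrite (eq_bigr (fun a : 'I_m.+1 => a%:R * ('C(m, a)%:R * (a%:R * x ^+ a * y ^+ (m - a)))));
  last by move=> a _; ring.
rewrite (A_left (fun a => a%:R * x ^+ a * y ^+ (m - a))); case: m => [|m]; first by rewrite big_ord0 !mul0r.
rewrite -mulrA; congr (_ * _); rewrite /=.
rewrite (eq_bigr (fun a : 'I_m.+1 => x * (a%:R * ('C(m, a)%:R * x ^+ a * y ^+ (m - a))) + x * ('C(m, a)%:R * x ^+ a * y ^+ (m - a)))); last first.
  by move=> a _; rewrite subSS exprS (natrD _ 1%N); ring.
by rewrite big_split /= -!mulr_sumr G1 B0; ring.
Qed.

Lemma Lra x y m :
  \sum_(a < m.+1) a%:R * ((m - a)%:R * ('C(m, a)%:R * x ^+ a * y ^+ (m - a).-1)) =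
  m%:R * x * ((m.-1)%:R * (x + y) ^+ (m.-1).-1).
Proof.
rewrite (eq_bigr (fun a : 'I_m.+1 => a%:R * ('C(m, a)%:R * ((m - a)%:R * x ^+ a * y ^+ (m - a).-1))));
  last by move=> a _; ring.
rewrite (A_left (fun a => (m - a)%:R * x ^+ a * y ^+ (m - a).-1)); case: m => [|m]; first by rewrite big_ord0 !mul0r.
rewrite -mulrA; congr (_ * _); rewrite /= -Lr mulr_sumr; apply: eq_bigr => a _.
rewrite subSS exprS; ring.
Qed.
End Gen.


Section Ker.
Variable R : comNzRingType.
Variables p xi : R.
Let q := p * (1 - xi).
Let r := p * xi.
Let u := 1 - p.
Let w := r + u.

Definition XX t a i : R := ('C(t, a) * 'C(t - a, i))%:R * q ^+ a * r ^+ i * u ^+ (t - a - i).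
Definition YY s j : R := 'C(s, j)%:R * p ^+ j * u ^+ (s - j).

Lemma kernelE t s a b : amp_kernel p xi t s a b = \sum_(i < b.+1) XX t a i * YY s (b - i).
Proof. by []. Qed.

Lemma qw1 : q + w = 1. Proof. rewrite /q /w /r /u; ring. Qed.

Lemma IN t a d0 d1 :
  \sum_(i < t.+1) XX t a i * (d0 + d1 * i%:R) =
  'C(t, a)%:R * q ^+ a * (d0 * w ^+ (t - a) + d1 * ((t - a)%:R * r * w ^+ (t - a).-1)).
Proof.
have h1 : ((t - a).+1 <= t.+1)%N by rewrite ltnS leq_subr.
have h2 : forall i, ((t - a).+1 <= i)%N -> XX t a i * (d0 + d1 * i%:R) = 0.
  by move=> i hi; rewrite /XX (bin_small hi) muln0 !mul0r.
rewrite (sum_trunc h1 h2).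
rewrite (eq_bigr (fun i : 'I_(t - a).+1 => 'C(t, a)%:R * q ^+ a * d0 * ('C(t - a, i)%:R * r ^+ i * u ^+ (t - a - i))
   + 'C(t, a)%:R * q ^+ a * d1 * (i%:R * ('C(t - a, i)%:R * r ^+ i * u ^+ (t - a - i))))); last first.
  by move=> i _; rewrite /XX natrM; ring.
by rewrite big_split /= -!mulr_sumr B0 G1; ring.
Qed.

Lemma MX t c0 c1 c2 c3 c4 :
  \sum_(a < t.+1) \sum_(i < t.+1) XX t a i *
     (c0 + c1 * a%:R + c2 * i%:R + c3 * a%:R ^+ 2 + c4 * a%:R * i%:R) =
  c0 + c1 * (t%:R * q) + c2 * (t%:R * r) + c3 * (t%:R * q * ((t.-1)%:R * q + 1))
     + c4 * (t%:R * (t.-1)%:R * q * r).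
Proof.
rewrite (eq_bigr (fun a : 'I_t.+1 => 'C(t, a)%:R * q ^+ a * ((c0 + c1 * a%:R + c3 * a%:R ^+ 2) * w ^+ (t - a) + (c2 + c4 * a%:R) * ((t - a)%:R * r * w ^+ (t - a).-1)))); last first.
  move=> a _; rewrite -IN; apply: eq_bigr => i _; congr (_ * _); ring.
rewrite (eq_bigr (fun a : 'I_t.+1 =>
    c0 * ('C(t, a)%:R * q ^+ a * w ^+ (t - a))
  + c1 * (a%:R * ('C(t, a)%:R * q ^+ a * w ^+ (t - a)))
  + c3 * (a%:R ^+ 2 * ('C(t, a)%:R * q ^+ a * w ^+ (t - a)))
  + c2 * r * ((t - a)%:R * ('C(t, a)%:R * q ^+ a * w ^+ (t - a).-1))
  + c4 * r * (a%:R * ((t - a)%:R * ('C(t, a)%:R * q ^+ a * w ^+ (t - a).-1))))); last first.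
  by move=> a _; ring.
rewrite !big_split /= -!mulr_sumr B0 G1 G2 Lr Lra qw1 !expr1n; ring.
Qed.

Lemma MY s c1 c2 :
  \sum_(j < s.+1) YY s j * (c1 + c2 * j%:R) = c1 + c2 * (s%:R * p).
Proof.
rewrite (eq_bigr (fun j : 'I_s.+1 => c1 * ('C(s, j)%:R * p ^+ j * u ^+ (s - j)) + c2 * (j%:R * ('C(s, j)%:R * p ^+ j * u ^+ (s - j))))); last first.
  by move=> j _; rewrite /YY; ring.
have pu : p + u = 1 by rewrite /u; ring.
by rewrite big_split /= -!mulr_sumr B0 G1 pu !expr1n; ring.
Qed.

Definition KE t s (f : nat -> nat -> R) :=
  \sum_(a < t.+1) \sum_(i < t.+1) \sum_(j < s.+1) XX t a i * YY s j * f (t + a)%N (s + (i + j))%N.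

Lemma KE_gen t s f c0 c1 c2 c3 c4 c5 c6 :
  (forall a i j, f (t + a)%N (s + (i + j))%N =
     c0 + c1 * a%:R + c2 * i%:R + c3 * a%:R ^+ 2 + c4 * a%:R * i%:R + (c5 + c6 * a%:R) * j%:R) ->
  KE t s f = c0 + c5 * (s%:R * p) + (c1 + c6 * (s%:R * p)) * (t%:R * q) + c2 * (t%:R * r)
     + c3 * (t%:R * q * ((t.-1)%:R * q + 1)) + c4 * (t%:R * (t.-1)%:R * q * r).
Proof.
move=> hf; rewrite /KE -MX; apply: eq_bigr => a _; apply: eq_bigr => i _.
rewrite (eq_bigr (fun j : 'I_s.+1 => XX t a i * (YY s j * ((c0 + c1 * a%:R + c2 * i%:R + c3 * a%:R ^+ 2 + c4 * a%:R * i%:R) + (c5 + c6 * a%:R) * j%:R)))); last first.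
  by move=> j _; rewrite hf mulrA.
rewrite -mulr_sumr MY; congr (_ * _); ring.
Qed.

End Ker.


Section Inst.
Variable R : comNzRingType.
Variables p xi : R.
Let q := p * (1 - xi).
Let r := p * xi.

Lemma predE (t : nat) : t%:R * (t.-1)%:R = t%:R ^+ 2 - t%:R :> R.
Proof. by case: t => [|t]; rewrite ?mul0r ?expr0n ?subr0 // -natr1 /=; ring. Qed.

Lemma KE_T t s : KE p xi t s (fun t' _ => t'%:R) = (1 + q) * t%:R.
Proof.
rewrite (@KE_gen _ p xi t s _ t%:R 1 0 0 0 0 0); last by move=> a i j; rewrite natrD; ring.
rewrite /q; ring.
Qed.

Lemma KE_S t s : KE p xi t s (fun _ s' => s'%:R) = (1 + p) * s%:R + r * t%:R.
Proof.
rewrite (@KE_gen _ p xi t s _ s%:R 0 1 0 0 1 0); last by move=> a i j; rewrite !natrD; ring.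
rewrite /r; ring.
Qed.

Lemma KE_T2 t s : KE p xi t s (fun t' _ => t'%:R ^+ 2) =
  (1 + q) ^+ 2 * t%:R ^+ 2 + q * (1 - q) * t%:R.
Proof.
rewrite (@KE_gen _ p xi t s _ (t%:R ^+ 2) (2 * t%:R) 0 1 0 0 0); last by move=> a i j; rewrite !natrD; ring.
rewrite /q; case: t => [|t] /=; first ring.
rewrite -[t.+1%:R]natr1; ring.
Qed.

Lemma KE_TS t s : KE p xi t s (fun t' s' => t'%:R * s'%:R) =
  (1 + p) * (1 + q) * (t%:R * s%:R) + r * (1 + q) * t%:R ^+ 2 - q * r * t%:R.
Proof.
rewrite (@KE_gen _ p xi t s _ (t%:R * s%:R) s%:R t%:R 0 1 t%:R 1); last by move=> a i j; rewrite !natrD; ring.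
rewrite /q /r; case: t => [|t] /=; first ring.
rewrite -[t.+1%:R]natr1; ring.
Qed.
End Inst.


Section Step.
Variable R : comNzRingType.
Variables p xi : R.

Lemma inner_step (n t s : nat) (f : nat -> nat -> R) :
  (t + s <= 2 ^ n)%N ->
  \sum_(t' < (2 ^ n.+1).+1) \sum_(s' < (2 ^ n.+1).+1)
     (if (t <= t')%N && (s <= s')%N then amp_kernel p xi t s (t' - t) (s' - s) else 0) * f t' s'
  = KE p xi t s f.
Proof.
move=> hts.
have e2 : (2 ^ n.+1 = 2 ^ n + 2 ^ n)%N by rewrite expnS mul2n addnn.
rewrite e2; set M := (2 ^ n)%N in hts *.
set N := (M + M).+1.
pose H a := \sum_(b < N - s) amp_kernel p xi t s a b * f (t + a)%N (s + b)%N.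
rewrite (eq_bigr (fun t' : 'I_N => if (t <= t')%N then H (t' - t)%N else 0)); last first.
  move=> t' _; case: (boolP (t <= t')%N) => htt /=; last by rewrite big1 // => s' _; rewrite mul0r.
  rewrite /H -(@sum_shift _ (fun b => amp_kernel p xi t s (t' - t) b * f (t + (t' - t))%N (s + b)%N) s N); last by rewrite /N; lia.
  apply: eq_bigr => s' _; case: (boolP (s <= s')%N) => hss /=; last by rewrite mul0r.
  by rewrite !subnKC.
rewrite sum_shift; last by rewrite /N; lia.
rewrite /KE.
have ha : (t.+1 <= N - t)%N by rewrite /N; lia.
rewrite (sum_trunc ha); last first.
  move=> a hta; rewrite /H big1 // => b _; rewrite kernelE big1 ?mul0r // => i _.
  by rewrite /XX bin_small // mul0n !mul0r.
apply: eq_bigr => a _; rewrite /H.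
rewrite (eq_bigr (fun b : 'I_(N - s) => \sum_(i < b.+1)
    (fun i j => XX p xi t a i * YY p s j * f (t + a)%N (s + (i + j))%N) i (b - i)%N)); last first.
  move=> b _; rewrite kernelE mulr_suml; apply: eq_bigr => i _.
  have hib : (i <= b)%N by have := ltn_ord i; lia.
  by rewrite subnKC.
rewrite (sum_tri (fun i j => XX p xi t a i * YY p s j * f (t + a)%N (s + (i + j))%N)).
have hi : (t.+1 <= N - s)%N by rewrite /N; lia.
rewrite (@sum_trunc _ (fun i => \sum_(j < N - s - i) XX p xi t a i * YY p s j * f (t + a)%N (s + (i + j))%N) _ _ hi); last first.
  move=> i hti; rewrite big1 // => j _; rewrite /XX (@bin_small (t - a)%N i) ?muln0 ?mul0r //.
  by apply: leq_ltn_trans (leq_subr _ _) hti.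
apply: eq_bigr => i _.
have hj : (s.+1 <= N - s - i)%N by move: (ltn_ord i); rewrite /N; move: (nat_of_ord i) => k; lia.
rewrite (@sum_trunc _ (fun j => XX p xi t a i * YY p s j * f (t + a)%N (s + (i + j))%N) _ _ hj) //.
by move=> j hsj; rewrite /YY bin_small // !mul0r mulr0 mul0r.
Qed.
End Step.


Section Step2.
Variable R : comNzRingType.
Variables p xi : R.

Lemma kernel0 t s a b : (t + s < a + b)%N -> amp_kernel p xi t s a b = 0.
Proof.
move=> h; rewrite kernelE big1 // => i _.
have hib : (i <= b)%N by have := ltn_ord i; lia.
case: (leqP a t) => hat; last by rewrite /XX bin_small // mul0n !mul0r.
case: (leqP i (t - a)) => hit; last by rewrite /XX (@bin_small (t - a)%N i) // muln0 !mul0r.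
have hs : (s < b - i)%N by lia.
by rewrite /YY bin_small // !mul0r mulr0.
Qed.

Lemma dist0 m t s : (2 ^ m < t + s)%N -> amp_dist p xi m t s = 0.
Proof.
elim: m t s => [|m IH] t s h /=.
  case: (t =P 1%N) => [ht|] //=; case: (s =P 0%N) => [hs|] //=.
  by move: h; rewrite ht hs expn0.
rewrite big1 // => t0 _; rewrite big1 // => s0 _.
case: (leqP (t0 + s0) (2 ^ m)) => h2; last by rewrite IH ?mul0r.
case: ifP => [/andP [h3 h4]|]; last by rewrite mulr0.
rewrite kernel0 ?mulr0 //.
move: h; rewrite expnS; lia.
Qed.

Lemma stepE n f : amp_E p xi n.+1 f = amp_E p xi n (fun t s => KE p xi t s f).
Proof.
rewrite /amp_E /=.
transitivity (\sum_(t' < (2 ^ n.+1).+1) \sum_(s' < (2 ^ n.+1).+1)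
   \sum_(t < (2 ^ n).+1) \sum_(s < (2 ^ n).+1) amp_dist p xi n t s *
     ((if (t <= t')%N && (s <= s')%N then amp_kernel p xi t s (t' - t) (s' - s) else 0) * f t' s')).
  apply: eq_bigr => t' _; apply: eq_bigr => s' _; rewrite mulr_suml; apply: eq_bigr => t _.
  by rewrite mulr_suml; apply: eq_bigr => s _; rewrite mulrA.
rewrite (eq_bigr (fun t' : 'I_(2 ^ n.+1).+1 => \sum_(t < (2 ^ n).+1) \sum_(s' < (2 ^ n.+1).+1) \sum_(s < (2 ^ n).+1) amp_dist p xi n t s *
     ((if (t <= t')%N && (s <= s')%N then amp_kernel p xi t s (t' - t) (s' - s) else 0) * f t' s'))); last first.
  move=> t' _; exact: exchange_big.
rewrite exchange_big; apply: eq_bigr => t _.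
rewrite (eq_bigr (fun t' : 'I_(2 ^ n.+1).+1 => \sum_(s < (2 ^ n).+1) \sum_(s' < (2 ^ n.+1).+1) amp_dist p xi n t s *
     ((if (t <= t')%N && (s <= s')%N then amp_kernel p xi t s (t' - t) (s' - s) else 0) * f t' s'))); last first.
  move=> t' _; exact: exchange_big.
rewrite exchange_big; apply: eq_bigr => s _.
case: (leqP (t + s) (2 ^ n)) => h.
  rewrite -(@inner_step _ p xi n) // mulr_sumr; apply: eq_bigr => t' _.
  by rewrite mulr_sumr.
rewrite dist0 // mul0r big1 // => t' _; rewrite big1 // => s' _; by rewrite mul0r.
Qed.

Lemma E_lin n c1 c2 f g :
  amp_E p xi n (fun t s => c1 * f t s + c2 * g t s) = c1 * amp_E p xi n f + c2 * amp_E p xi n g.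
Proof.
rewrite /amp_E !mulr_sumr -big_split; apply: eq_bigr => t _.
rewrite !mulr_sumr -big_split; apply: eq_bigr => s _ /=; ring.
Qed.

Lemma E_ext n f g : (forall t s, f t s = g t s) -> amp_E p xi n f = amp_E p xi n g.
Proof.
move=> h; rewrite /amp_E; apply: eq_bigr => t _; apply: eq_bigr => s _; by rewrite h.
Qed.

Lemma E0 f : amp_E p xi 0 f = f 1%N 0%N.
Proof.
rewrite /amp_E /= !big_ord_recr !big_ord0 /=; ring.
Qed.
End Step2.


Section Main.
Variable R : comNzRingType.
Variables p xi : R.
Let q := p * (1 - xi).
Let r := p * xi.

Lemma E_scal n c f : amp_E p xi n (fun t s => c * f t s) = c * amp_E p xi n f.
Proof.
rewrite (@E_ext _ p xi n _ (fun t s => c * f t s + 0 * f t s)); last by move=> t s; ring.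
by rewrite E_lin; ring.
Qed.

Lemma rT n : amp_ET p xi n.+1 = (1 + q) * amp_ET p xi n.
Proof.
rewrite /amp_ET stepE (@E_ext _ p xi n _ (fun t s => (1 + q) * t%:R)); last by move=> t s; rewrite KE_T.
by rewrite E_scal.
Qed.

Lemma rS n : amp_ES p xi n.+1 = (1 + p) * amp_ES p xi n + r * amp_ET p xi n.
Proof.
rewrite /amp_ES /amp_ET stepE (@E_ext _ p xi n _ (fun t s => (1 + p) * s%:R + r * t%:R)); last by move=> t s; rewrite KE_S.
by rewrite E_lin.
Qed.

Definition ET2 n := amp_E p xi n (fun t _ => t%:R ^+ 2).

Lemma rT2 n : ET2 n.+1 = (1 + q) ^+ 2 * ET2 n + q * (1 - q) * amp_ET p xi n.
Proof.
rewrite /ET2 /amp_ET stepE (@E_ext _ p xi n _ (fun t s => (1 + q) ^+ 2 * t%:R ^+ 2 + q * (1 - q) * t%:R)); last by move=> t s; rewrite KE_T2.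
by rewrite E_lin.
Qed.

Lemma rTS n : amp_ETS p xi n.+1 =
  (1 + p) * (1 + q) * amp_ETS p xi n + 1 * (r * (1 + q) * ET2 n + (- (q * r)) * amp_ET p xi n).
Proof.
rewrite /ET2 /amp_ETS /amp_ET stepE. rewrite (@E_ext _ p xi n _ (fun t s => (1 + p) * (1 + q) * (t%:R * s%:R) + 1 * (r * (1 + q) * t%:R ^+ 2 + (- (q * r)) * t%:R)));
  last by move=> t s; rewrite KE_TS /q /r; ring.
by rewrite E_lin E_lin.
Qed.

Lemma b0 : [/\ amp_ET p xi 0 = 1, amp_ES p xi 0 = 0, ET2 0 = 1 & amp_ETS p xi 0 = 0].
Proof. by rewrite /amp_ET /amp_ES /ET2 /amp_ETS !E0 /=; split; ring. Qed.
End Main.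


Theorem mainTheorem1 (R : realFieldType) (p xi : R) (n : nat)
  (hp0 : 0 <= p) (hp1 : p <= 1) (hxi0 : 0 <= xi) (hxi1 : xi <= 1) :
  let q := p * (1 - xi) in
  [/\ amp_ET p xi n = (1 + q) ^+ n,
      amp_ES p xi n = (1 + p) ^+ n - (1 + q) ^+ n,
      amp_VarT p xi n = (1 - q) / (1 + q) * (1 + q) ^+ n * ((1 + q) ^+ n - 1),
      amp_ETS p xi n = (1 + q) ^+ n / (1 + q) *
        (xi * (1 - (1 + p) ^+ n) + 2 * ((1 + p) ^+ n - (1 + q) ^+ n))
    & amp_CovTS p xi n = (1 + q) ^+ n / (1 + q) *
        ((1 - q) * ((1 + p) ^+ n - (1 + q) ^+ n) - xi * ((1 + p) ^+ n - 1))].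
Proof.
move=> q; rewrite /q.
have q0 : 0 <= p * (1 - xi) by rewrite mulr_ge0 // subr_ge0.
have hQ : 1 + p * (1 - xi) != 0 by rewrite gt_eqF //; lra.
have [e0 e1 e2 e3] := b0 p xi.
have hT : forall m, amp_ET p xi m = (1 + p * (1 - xi)) ^+ m.
  by elim=> [|m IH]; rewrite ?e0 ?expr0 // rT IH exprS.
have hS : forall m, amp_ES p xi m = (1 + p) ^+ m - (1 + p * (1 - xi)) ^+ m.
  elim=> [|m IH]; first by rewrite e1 !expr0 subrr.
  rewrite rS IH hT !exprS; ring.
have hT2 : forall m, ET2 p xi m = (1 + p * (1 - xi)) ^+ m * (1 + p * (1 - xi)) ^+ m +
    (1 - p * (1 - xi)) / (1 + p * (1 - xi)) * (1 + p * (1 - xi)) ^+ m * ((1 + p * (1 - xi)) ^+ m - 1).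
  elim=> [|m IH]; first by rewrite e2 !expr0; field.
  rewrite rT2 IH hT !exprS; move: ((1 + p * (1 - xi)) ^+ m) => A.
  by field.
have hTS : forall m, amp_ETS p xi m = (1 + p * (1 - xi)) ^+ m / (1 + p * (1 - xi)) *
        (xi * (1 - (1 + p) ^+ m) + 2 * ((1 + p) ^+ m - (1 + p * (1 - xi)) ^+ m)).
  elim=> [|m IH]; first by rewrite e3 !expr0; field.
  rewrite rTS IH hT2 hT !exprS; move: ((1 + p * (1 - xi)) ^+ m) ((1 + p) ^+ m) => A B.
  by field.
split.
- exact: hT.
- exact: hS.
- rewrite /amp_VarT; change (amp_E p xi n (fun t _ => t%:R ^+ 2)) with (ET2 p xi n).
  rewrite hT2 hT; move: ((1 + p * (1 - xi)) ^+ n) => A; by field.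
- exact: hTS.
- rewrite /amp_CovTS hTS hT hS; move: ((1 + p * (1 - xi)) ^+ n) ((1 + p) ^+ n) => A B.
  by field.
Qed.
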